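(* Let $x$ be fixed, let $\pi_{\pm|x}\ge0$ with $\pi_{+|x}+\pi_{-|x}=1$, and let $\rho_{\pm|x}=|\psi_{\pm|x}\rangle\langle\psi_{\pm|x}|=\tfrac12(I+\mathbf s_{\pm|x}\cdot\boldsymbol\sigma)$ be pure qubit states. Define the fidelity-based discriminability of the ensemble $\{(\pi_{+|x},\rho_{+|x}),(\pi_{-|x},\rho_{-|x})\}$ by $$D_x=\eta_1^2+\eta_2^2+2\eta_1\eta_2\sqrt{1-|\gamma|^2}+|\gamma|^2(\eta_1\eta_2-\eta_{\min}^2),$$ where $\eta_1=\pi_{+|x}$, $\eta_2=\pi_{-|x}$, $\eta_{\min}=\min\{\eta_1,\eta_2\}$ and $\gamma=\langle\psi_{+|x}|\psi_{-|x}\rangle$. With the SWAP-test pass probability $p(\mathsf{pass}|\rho,\sigma)=\tfrac12(1+\mathrm{Tr}(\rho\sigma))$, let $p_{\mathrm{pur}}^{\pm|x}=p(\mathsf{pass}|\rho_{\pm|x},\rho_{\pm|x})$, $p_{\mathrm{ov}}^{x}=p(\mathsf{pass}|\rho_{+|x},\rho_{-|x})$, and let $\widetilde R_x\ge0$ be given by $$\widetilde R_x^2=2\Big[\pi_{+|x}^2(2p_{\mathrm{pur}}^{+|x}-1)+\pi_{-|x}^2(2p_{\mathrm{pur}}^{-|x}-1)-2\pi_{+|x}\pi_{-|x}(2p_{\mathrm{ov}}^{x}-1)\Big]-(\pi_{+|x}-\pi_{-|x})^2 .$$ Then $\widetilde R_x\le 2D_x-1$.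
   Context: $\boldsymbol\sigma$ denotes the vector of Pauli matrices. In the paper, $\pi_{a|x}=p(a|x)$ are Alice's outcome probabilities and $\rho_{a|x}$ Bob's conditional preparations in a Bell experiment. *)

(* Defs.v *)
From HB Require Import structures.
From mathcomp Require Import all_boot all_order all_algebra.
From mathcomp Require Import complex.
Set Implicit Arguments. Unset Strict Implicit. Unset Printing Implicit Defensive.
Import Order.TTheory GRing.Theory Num.Theory.
Local Open Scope ring_scope.

Definition adjmx (R : rcfType) m n (A : 'M[R[i]]_(m, n)) : 'M[R[i]]_(n, m) :=
  (map_mx (@conjc R) A)^T.

Definition braket (R : rcfType) n (psi phi : 'cV[R[i]]_n) : R[i] :=
  (adjmx psi *m phi) 0 0.

Definition unit_ket (R : rcfType) n (psi : 'cV[R[i]]_n) : Prop :=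
  braket psi psi = 1.

Definition ketbra (R : rcfType) n (psi : 'cV[R[i]]_n) : 'M[R[i]]_n :=
  psi *m adjmx psi.

Definition p_pass (R : rcfType) n (rho sigma : 'M[R[i]]_n) : R[i] :=
  (1 + \tr (rho *m sigma)) / 2.

Definition cabs (R : rcfType) (z : R[i]) : R := Normc.normc z.

Definition discrim (R : rcfType) (eta1 eta2 : R) (gamma : R[i]) : R :=
  let etamin := Num.min eta1 eta2 in
  eta1 ^+ 2 + eta2 ^+ 2 + 2 * eta1 * eta2 * Num.sqrt (1 - cabs gamma ^+ 2)
  + cabs gamma ^+ 2 * (eta1 * eta2 - etamin ^+ 2).

(* Main.v *)
Require Import Defs.
From HB Require Import structures.
From mathcomp Require Import all_boot all_order all_algebra.
From mathcomp Require Import complex ring lra.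
Import Order.TTheory GRing.Theory Num.Theory.
Local Open Scope ring_scope.
Local Open Scope complex_scope.

Lemma sq_le {R : realFieldType} (x y : R) : 0 <= x -> 0 <= y -> x ^+ 2 <= y ^+ 2 -> x <= y.
Proof. move=> hx hy h; nra. Qed.

Lemma core {R : realFieldType} {a s Rt : R} :
  0 <= a -> a <= 1 - a -> 0 <= s -> s <= 1 -> 0 <= Rt ->
  Rt ^+ 2 = 1 - 4 * a * (1 - a) * (1 - s ^+ 2) ->
  Rt <= 2 * (a ^+ 2 + (1 - a) ^+ 2 + 2 * a * (1 - a) * s
        + (1 - s ^+ 2) * (a * (1 - a) - a ^+ 2)) - 1.
Proof.
move=> ha hab hs0 hs1 hR hR2.
set r := (X in _ <= X).
have hq : 0 <= 2 * a * (1 - a - a) by apply: mulr_ge0; [apply: mulr_ge0 => //|]; lra.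
have hr : 0 <= r.
  have -> : r = (1 - 2 * a) ^+ 2 + 4 * a * (1 - a) * s + (1 - s ^+ 2) * (2 * a * (1 - a - a)) by rewrite /r; ring.
  apply: addr_ge0; [apply: addr_ge0; [exact: sqr_ge0|]|].
    by apply: mulr_ge0 => //; apply: mulr_ge0; [apply: mulr_ge0|]; lra.
  by apply: mulr_ge0 => //; nra.
apply: sq_le => //.
rewrite -subr_ge0.
have -> : r ^+ 2 - Rt ^+ 2 = (1 - s) * s * (2 * a * (1 - a - a)) *
   (4 * (1 - a) + 4 * a * s + (2 * a * (1 - a - a)) * s * (1 - s)).
  by rewrite hR2 /r; ring.
apply: mulr_ge0; first (apply: mulr_ge0 => //; apply: mulr_ge0; lra).
apply: addr_ge0; first (apply: addr_ge0; nra).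
apply: mulr_ge0; [apply: mulr_ge0|]; lra.
Qed.

Lemma braket2 {R : rcfType} (psi phi : 'cV[R[i]]_2) :
  braket psi phi = (psi 0 0)^* * phi 0 0 + (psi 1 0)^* * phi 1 0.
Proof.
rewrite /braket /adjmx !mxE big_ord_recr big_ord1 /= !mxE.
have E0 : widen_ord (leqnSn 1) ord0 = 0 :> 'I_2 by apply/val_inj.
have E1 : (ord_max : 'I_2) = 1 by apply/val_inj.
by rewrite E0 E1.
Qed.

Lemma cmul (R : rcfType) (a b c d : R) : (a +i* b) * (c +i* d) = (a*c - b*d) +i* (a*d + b*c).
Proof. by []. Qed.
Lemma cadd (R : rcfType) (a b c d : R) : (a +i* b) + (c +i* d) = (a+c) +i* (b+d).
Proof. by []. Qed.
Lemma cconj (R : rcfType) (a b : R) : (a +i* b)^* = a +i* (-b).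
Proof. by []. Qed.

Lemma gamma_facts (R : rcfType) (psip psim : 'cV[R[i]]_2) :
  unit_ket psip -> unit_ket psim ->
  let g := cabs (braket psip psim) ^+ 2 in
  [/\ braket psip psim * (braket psip psim)^* = g%:C, 0 <= g & g <= 1].
Proof.
rewrite /unit_ket => hp hm.
have hb := braket2 psip psim.
rewrite !braket2 in hp hm.
case E0: (psip 0 0) hb hp => [a0 b0]; case E1: (psip 1 0) => [a1 b1].
case F0: (psim 0 0) hm => [c0 d0]; case F1: (psim 1 0) => [c1 d1] hm hb.
move=> /(congr1 (@complex.Re R)) /= hp.
move: hm => /(congr1 (@complex.Re R)) /= hm.
set X := a0 * c0 + b0 * d0 + (a1 * c1 + b1 * d1).
set Y := a0 * d0 - b0 * c0 + (a1 * d1 - b1 * c1).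
have -> : braket psip psim = X +i* Y.
  rewrite hb; apply/eqP; rewrite eq_complex /=; apply/andP; split; apply/eqP; rewrite /X /Y; ring.
rewrite /cabs /=.
have hg0 : 0 <= X ^+ 2 + Y ^+ 2 by apply: addr_ge0; apply: sqr_ge0.
rewrite sqr_sqrtr //; split => //.
  apply/eqP; rewrite eq_complex /=; apply/andP; split; apply/eqP; ring.
have L : (a0 * a0 - - b0 * b0 + (a1 * a1 - - b1 * b1)) * (c0 * c0 - - d0 * d0 + (c1 * c1 - - d1 * d1))
   = X ^+ 2 + Y ^+ 2 + (a0*c1 - b0*d1 - a1*c0 + b1*d0) ^+ 2 + (a0*d1 + b0*c1 - a1*d0 - b1*c0) ^+ 2.
  by rewrite /X /Y; ring.
rewrite hp hm mul1r in L.
rewrite L -addrA lerDl; apply: addr_ge0; exact: sqr_ge0.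
Qed.

Lemma braketC (R : rcfType) (psi phi : 'cV[R[i]]_2) :
  braket phi psi = (braket psi phi)^*.
Proof. rewrite !braket2 rmorphD !rmorphM /= !conjcK; ring. Qed.

Lemma tr_kb (R : rcfType) (psi phi : 'cV[R[i]]_2) :
  \tr (ketbra psi *m ketbra phi) = braket psi phi * (braket psi phi)^*.
Proof.
rewrite /ketbra -mulmxA mxtrace_mulC -!mulmxA.
rewrite mulmxA /mxtrace big_ord1 mxE big_ord1.
have -> : (adjmx phi *m psi) ord0 ord0 = braket phi psi by [].
by rewrite braketC.
Qed.

Lemma pp (R : rcfType) (t : R[i]) : 2%:R * ((1 + t) / 2%:R) - 1 = t.
Proof. by rewrite mulrC divfK ?pnatr_eq0 // [1 + t]addrC addrK. Qed.

Theorem lemma2 (R : rcfType) (pip pim : R) (psip psim : 'cV[R[i]]_2) (Rt : R) :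
  0 <= pip -> 0 <= pim -> pip + pim = 1 ->
  unit_ket psip -> unit_ket psim ->
  0 <= Rt ->
  (Rt ^+ 2)%:C =
    2%:R * (pip%:C ^+ 2 * (2%:R * p_pass (ketbra psip) (ketbra psip) - 1)
          + pim%:C ^+ 2 * (2%:R * p_pass (ketbra psim) (ketbra psim) - 1)
          - 2%:R * pip%:C * pim%:C
              * (2%:R * p_pass (ketbra psip) (ketbra psim) - 1))
    - (pip%:C - pim%:C) ^+ 2 ->
  Rt <= 2 * discrim pip pim (braket psip psim) - 1.
Proof.
move=> ha hb hab hp hm hR hE.
move: (gamma_facts _ _ _ hp hm) => /= [hgg hg0 hg1].
have hp' : braket psip psip = 1 := hp.
have hm' : braket psim psim = 1 := hm.
rewrite /p_pass !tr_kb hp' hm' !pp hgg in hE.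
have e1 : (1 : R[i]) * 1^* = 1.
  by apply/eqP; rewrite eq_complex /= oppr0 !mul0r !mulr0 mul1r subr0 addr0 !eqxx.
rewrite e1 in hE.
set g := cabs (braket psip psim) ^+ 2 in hgg hg0 hg1 hE *.
have hE' : Rt ^+ 2 = 2 * (pip ^+ 2 + pim ^+ 2 - 2 * pip * pim * g) - (pip - pim) ^+ 2.
  apply: complexI; rewrite hE.
  rewrite !(rmorphB, rmorphD, rmorphM, rmorphXn, rmorph_nat, rmorph1); ring.
rewrite /discrim -/g.
have hs2 : Num.sqrt (1 - g) ^+ 2 = 1 - g by rewrite sqr_sqrtr // subr_ge0.
have hs0 : 0 <= Num.sqrt (1 - g) by exact: sqrtr_ge0.
set s := Num.sqrt (1 - g) in hs2 hs0 *.
have hs1 : s <= 1 by nra.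
have hg : g = 1 - s ^+ 2 by rewrite hs2; ring.
have hpim : pim = 1 - pip by rewrite -hab; ring.
rewrite hg in hE' *; rewrite hpim in hE' *.
case: (leP pip (1 - pip)) => h.
  have := core ha h hs0 hs1 hR ltac:(rewrite hE'; ring).
  move=> H; apply: (le_trans H); rewrite le_eqVlt; apply/orP; left; apply/eqP; ring.
have ha' : 0 <= 1 - pip by rewrite -hpim.
have h' : 1 - pip <= 1 - (1 - pip) by rewrite subKr ltW.
have := core ha' h' hs0 hs1 hR ltac:(rewrite hE'; ring).
move=> H; apply: (le_trans H); rewrite le_eqVlt; apply/orP; left; apply/eqP; ring.
Qed.
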